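(* Let $j$ and $k$ be two non-negative integers. Then we have \[\mathrm{Tv}(\mathbb{Z}^{j+1} \times \mathbb{R}^k,m) > 2\mathrm{Tv}(\mathbb{Z}^j \times \mathbb{R}^k, m)-2.\]
   Context: For $S\subseteq\mathbb{R}^d$ and an integer $m\geq 2$, the Tverberg number $\mathrm{Tv}(S,m)$ is the smallest positive integer $n$ such that any multiset of $n$ points in $S$ admits a partition into $m$ submultisets $A_1,\dots,A_m$ with $\left(\bigcap_{i=1}^m\mathrm{conv}(A_i)\right)\cap S\neq\varnothing$ (and $\mathrm{Tv}(S,m)=\infty$ if no such number exists). *)

(* Defs.v *)
From HB Require Import structures.
From mathcomp Require Import all_boot all_order all_algebra.
From mathcomp Require Import boolp classical_sets reals.
Set Implicit Arguments. Unset Strict Implicit. Unset Printing Implicit Defensive.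
Import Order.TTheory GRing.Theory Num.Theory.
Local Open Scope ring_scope.
Local Open Scope classical_set_scope.

(* A multiset of n points is a family
   x : 'I_n -> 'rV_d; a partition into m submultisets is a colouring
   f : 'I_n -> 'I_m (part i = the points p with f p = i). *)

Definition in_conv (R : realType) (d n m : nat) (x : 'I_n -> 'rV[R]_d)
  (f : 'I_n -> 'I_m) (i : 'I_m) (y : 'rV[R]_d) : Prop :=
  exists w : 'I_n -> R,
    [/\ forall p, 0 <= w p,
        forall p, f p != i -> w p = 0,
        \sum_(p < n) w p = 1 &
        \sum_(p < n) w p *: x p = y].

Definition TvP (R : realType) (d : nat) (S : set 'rV[R]_d) (m n : nat) : Prop :=
  forall x : 'I_n -> 'rV[R]_d, (forall p, S (x p)) ->
    exists f : 'I_n -> 'I_m, exists y : 'rV[R]_d,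
      S y /\ forall i : 'I_m, in_conv x f i y.

Definition TvPb (R : realType) (d : nat) (S : set 'rV[R]_d) (m : nat) : pred nat :=
  fun n => `[< (0 < n)%N /\ TvP S m n >].

(* The Tverberg number: Some n = smallest positive n, None = infinity. *)
Definition Tv (R : realType) (d : nat) (S : set 'rV[R]_d) (m : nat) : option nat :=
  match pselect (exists n, TvPb S m n) with
  | left h => Some (ex_minn h)
  | right _ => None
  end.

(* Z^j x R^k inside R^(j+k): the first j coordinates are integers. *)
Definition ZR (R : realType) (j k : nat) : set 'rV[R]_(j + k) :=
  [set v | forall i : 'I_(j + k), (i < j)%N -> v 0 i \in Num.int].

(* Main.v *)
Require Import Defs.
From mathcomp Require Import all_boot all_order all_algebra.
From mathcomp Require Import boolp classical_sets reals.
From mathcomp Require Import zify.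

Set Implicit Arguments. Unset Strict Implicit. Unset Printing Implicit Defensive.
Import Order.TTheory GRing.Theory Num.Theory.

Section Aux.
Local Open Scope ring_scope.
Variable R : realType.

Definition hdr j k (y : 'rV[R]_(1 + (j + k))) : R := y 0 (lshift (j + k) (ord0 : 'I_1)).
Definition Er j k (c : R) (v : 'rV[R]_(j + k)) : 'rV[R]_(1 + (j + k)) :=
  row_mx (const_mx c) v.

Lemma hd_sum j k n (w : 'I_n -> R) (X : 'I_n -> 'rV[R]_(1 + (j + k))) :
  hdr (\sum_p w p *: X p) = \sum_p w p * hdr (X p).
Proof. by rewrite /hdr summxE; apply: eq_bigr => p _; rewrite mxE. Qed.

Lemma P_sum j k n (w : 'I_n -> R) (X : 'I_n -> 'rV[R]_(1 + (j + k))) :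
  rsubmx (\sum_p w p *: X p) = \sum_p w p *: rsubmx (X p).
Proof.
apply/rowP => i; rewrite !mxE !summxE; apply: eq_bigr => p _; by rewrite !mxE.
Qed.

Lemma hd_E j k c v : hdr (@Er j k c v) = c.
Proof. by rewrite /hdr /Er row_mxEl mxE. Qed.

Lemma P_E j k c v : rsubmx (@Er j k c v) = v.
Proof. by rewrite /Er row_mxKr. Qed.

Lemma ZR_iff j k (y : 'rV[R]_(1 + (j + k))) :
  (forall i : 'I_(1 + (j + k)), (i < j.+1)%N -> y 0 i \in Num.int) -> @ZR R j.+1 k y.
Proof. move=> h i; exact: h. Qed.

Lemma ZR_iff2 j k (y : 'rV[R]_(1 + (j + k))) : @ZR R j.+1 k y ->
  (forall i : 'I_(1 + (j + k)), (i < j.+1)%N -> y 0 i \in Num.int).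
Proof. move=> h i; exact: h. Qed.

Lemma ZR_E j k c v : c \in Num.int -> @ZR R j k v -> @ZR R j.+1 k (@Er j k c v).
Proof.
move=> hc hv; apply: ZR_iff => i; rewrite -(@splitK 1 (j + k) i).
case: (@split 1 (j + k) i) => [a|b] /= lt.
  by rewrite /Er row_mxEl mxE.
rewrite /Er row_mxEr; apply: hv; by move: lt; rewrite /= add1n ltnS.
Qed.

Lemma ZR_hd j k (y : 'rV[R]_(1 + (j + k))) : @ZR R j.+1 k y -> hdr y \in Num.int.
Proof. by move=> hy; apply: (ZR_iff2 hy). Qed.

Lemma ZR_P j k (y : 'rV[R]_(1 + (j + k))) : @ZR R j.+1 k y -> @ZR R j k (rsubmx y).
Proof. move=> hy i lt; rewrite mxE; apply: (ZR_iff2 hy); by rewrite /= add1n ltnS. Qed.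

Lemma int01 (t : R) : t \in Num.int -> 0 <= t -> t <= 1 -> t = 0 \/ t = 1.
Proof.
move=> /intrP [z ->]; rewrite ler0z lerz1 => h0 h1.
have : (z == 0) || (z == 1) by lia.
by case/orP => /eqP ->; [left | right].
Qed.


Lemma reduce j k m a : (0 < m)%N ->
  TvP (@ZR R j.+1 k) m (a + a) -> TvP (@ZR R j k) m a.
Proof.
move=> m0 H x Hx.
pose X : 'I_(a + a) -> 'rV[R]_(1 + (j + k)) := fun p =>
  match split p with inl q => Er 0 (x q) | inr q => Er 1 (x q) end.
have XL q : X (lshift a q) = Er 0 (x q) by rewrite /X (unsplitK (inl _ q)).
have XR q : X (rshift a q) = Er 1 (x q) by rewrite /X (unsplitK (inr _ q)).
have HX p : @ZR R j.+1 k (X p).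
  by rewrite /X; case: split => q; apply: ZR_E => //; rewrite ?intr0 ?intr1 ?rpred0 ?rpred1.
case: (H X HX) => f [y [Sy Hc]].
pose y' : 'rV[R]_(1 + (j + k)) := y.
have key i : exists w : 'I_(a + a) -> R, [/\ forall p, 0 <= w p,
    forall p, f p != i -> w p = 0,
    \sum_q w (lshift a q) + \sum_q w (rshift a q) = 1,
    \sum_q w (rshift a q) = hdr y' &
    \sum_q w (lshift a q) *: x q + \sum_q w (rshift a q) *: x q = rsubmx y'].
  case: (Hc i) => w [w0 wf ws wy].
  have wy' : \sum_p w p *: X p = y' := wy.
  exists w; split => //.
  - by move: ws; rewrite big_split_ord.
  - rewrite -wy' hd_sum big_split_ord /=.
    rewrite [Z in _ = Z + _]big1 ?add0r; last by move=> q _; rewrite XL hd_E mulr0.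
    by apply: eq_bigr => q _; rewrite XR hd_E mulr1.
  - rewrite -wy' P_sum big_split_ord /=.
    by congr (_ + _); apply: eq_bigr => q _; rewrite ?XL ?XR P_E.
have hy01 : hdr y' = 0 \/ hdr y' = 1.
  apply: int01; first exact: (ZR_hd (y := y') Sy).
  - case: (key (Ordinal m0)) => w [w0 _ _ <- _]; exact: sumr_ge0.
  - case: (key (Ordinal m0)) => w [w0 _ s1 <- _]; rewrite -s1 lerDr.
    exact: sumr_ge0.
case: hy01 => hy.
- exists (fun q => f (lshift a q)), (rsubmx y'); split; first exact: ZR_P.
  move=> i; case: (key i) => w [w0 wf s1 sR sy].
  have sR0 : \sum_q w (rshift a q) = 0 by rewrite sR hy.
  have wR q : w (rshift a q) = 0 by apply: (psumr_eq0P _ sR0) => // ? _; exact: w0.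
  exists (fun q => w (lshift a q)); split.
  + by move=> q; exact: w0.
  + by move=> q; exact: wf.
  + by rewrite -s1 sR0 addr0.
  + by rewrite -sy [Z in _ + Z]big1 ?addr0 // => q _; rewrite wR scale0r.
- exists (fun q => f (rshift a q)), (rsubmx y'); split; first exact: ZR_P.
  move=> i; case: (key i) => w [w0 wf s1 sR sy].
  have sL0 : \sum_q w (lshift a q) = 0.
    by move: s1; rewrite sR hy => /(congr1 (fun t => t - 1)); rewrite addrK subrr.
  have wL q : w (lshift a q) = 0 by apply: (psumr_eq0P _ sL0) => // ? _; exact: w0.
  exists (fun q => w (rshift a q)); split.
  + by move=> q; exact: w0.
  + by move=> q; exact: wf.
  + by rewrite sR hy.
  + by rewrite -sy [Z in Z + _]big1 ?add0r // => q _; rewrite wL scale0r.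
Qed.


Lemma monoS d (S : set 'rV[R]_d) m n : (0 < m)%N -> TvP S m n -> TvP S m n.+1.
Proof.
move=> m0 H x Hx.
case: (H (fun q => x (lift ord_max q)) (fun q => Hx _)) => f [y [Sy Hc]].
exists (fun p => oapp f (Ordinal m0) (unlift ord_max p)), y; split => // i.
case: (Hc i) => w [w0 wf ws wy].
have hw (q : 'I_n) : widen_ord (leqnSn n) q = lift ord_max q.
  by apply: val_inj => /=; rewrite /bump leqNgt ltn_ord.
exists (fun p => oapp w 0 (unlift ord_max p)); split.
- by move=> p; case: (unlift ord_max p) => [q|] /=.
- by move=> p; case: (unlift ord_max p) => [q|] //=; apply: wf.
- rewrite big_ord_recr /= unlift_none addr0 -ws; apply: eq_bigr => q _.
  by rewrite hw liftK.
- rewrite big_ord_recr /= unlift_none scale0r addr0 -wy; apply: eq_bigr => q _.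
  by rewrite hw liftK.
Qed.

Lemma mono d (S : set 'rV[R]_d) m n n' : (0 < m)%N -> (n <= n')%N ->
  TvP S m n -> TvP S m n'.
Proof.
move=> m0 /subnK <-; elim: (n' - n)%N => [//|t IH] H.
by rewrite addSn; apply: monoS => //; apply: IH.
Qed.

End Aux.

Theorem proposition1 (R : realType) (j k m : nat) (hm : (2 <= m)%N) :
  match Tv (@ZR R j.+1 k) m, Tv (@ZR R j k) m with
  | None, _ => True
  | Some N, Some n => is_true (2 * n - 2 < N)%N
  | Some _, None => False
  end.
Proof.
have m0 : (0 < m)%N by apply: leq_trans hm.
rewrite /Tv.
case: (pselect (exists n, TvPb (@ZR R j.+1 k) m n)) => [h1|//].
case: ex_minnP => N /asboolP [N0 HN] _.
have key a : (N <= a + a)%N -> TvP (@ZR R j k) m a.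
  by move=> le; apply: reduce => //; apply: mono HN.
case: (pselect (exists n, TvPb (@ZR R j k) m n)) => [h2|h2].
  case: (ex_minnP h2) => n _ nmin.
  rewrite ltnNge; apply/negP => le.
  have n1 : (0 < n.-1)%N by lia.
  have P1 : TvPb (@ZR R j k) m n.-1.
    by apply/asboolP; split => //; apply: key; lia.
  by have := nmin _ P1; lia.
apply: h2; exists N; apply/asboolP; split => //; apply: key; lia.
Qed.
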